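(* Let $m\ge 3$, let $C$ be a set of $m$ candidates, and let $T$ be the set of all $m!$ strict rankings of $C$. Let $w=(w_1,\dots,w_m)$ satisfy $1=w_1\ge w_2\ge\cdots\ge w_m=0$, and for $t\in T$, $\alpha\in C$ let $\sigma_t(\alpha)=w_i$, where $i$ is the position of $\alpha$ in $t$. Suppose $n$ voters each independently choose a ranking uniformly at random from $T$, let $N_t$ be the number of voters choosing $t$, and let $|\alpha|=\sum_{t\in T}N_t\sigma_t(\alpha)$. Then $$\mathbb{P}\bigl(\text{the scores } |\alpha|,\ \alpha\in C,\ \text{are pairwise distinct}\bigr)\to 1\qquad\text{as } n\to\infty.$$ *)

(* Defs.v *)
From HB Require Import structures.
From mathcomp Require Import all_boot all_order all_algebra all_fingroup.
From mathcomp Require Import all_classical all_reals all_analysis.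
Set Implicit Arguments. Unset Strict Implicit. Unset Printing Implicit Defensive.
Import Order.TTheory GRing.Theory Num.Theory.
Local Open Scope ring_scope.

(* Candidates: 'I_m.  Rankings: permutations t : {perm 'I_m}, read as
   t alpha = (0-based) position of candidate alpha in the ranking t.
   A profile of n voters: P : {ffun 'I_n -> {perm 'I_m}}. *)

Definition sigma (R : realType) (m : nat) (w : 'I_m -> R)
  (t : {perm 'I_m}) (alpha : 'I_m) : R := w (t alpha).

Definition Ncount (m n : nat) (P : {ffun 'I_n -> {perm 'I_m}})
  (t : {perm 'I_m}) : nat := #|[set v : 'I_n | P v == t]|.

Definition score (R : realType) (m n : nat) (w : 'I_m -> R)
  (P : {ffun 'I_n -> {perm 'I_m}}) (alpha : 'I_m) : R :=
  \sum_(t : {perm 'I_m}) (Ncount P t)%:R * sigma w t alpha.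

Definition distinct_scores (R : realType) (m n : nat) (w : 'I_m -> R)
  (P : {ffun 'I_n -> {perm 'I_m}}) : bool :=
  [forall alpha : 'I_m, forall beta : 'I_m,
     (alpha != beta) ==> (score w P alpha != score w P beta)].

(* Voters choose independently and uniformly: the profile is uniform on
   {ffun 'I_n -> {perm 'I_m}} (m!^n profiles). *)
Definition prob_distinct (R : realType) (m : nat) (w : 'I_m -> R) (n : nat) : R :=
  (#|[set P : {ffun 'I_n -> {perm 'I_m}} | distinct_scores w P]|%:R)
  / (#|{ffun 'I_n -> {perm 'I_m}}|%:R).

(* Main.v *)
Require Import Defs.
From HB Require Import structures.
From mathcomp Require Import all_boot all_order all_algebra all_fingroup.
From mathcomp Require Import all_classical all_reals all_analysis.
From mathcomp Require Import zify ring lra.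
Import Order.TTheory GRing.Theory Num.Theory.
Set Implicit Arguments. Unset Strict Implicit. Unset Printing Implicit Defensive.

Lemma central_rec k : 'C(k.+1.*2, k.+1) * k.+1 = 2 * k.*2.+1 * 'C(k.*2, k).
Proof.
have -> : k.+1.*2 = (k.*2.+1).+1 by rewrite doubleS.
rewrite binS.
have e1 : 'C(k.*2.+1, k) = 'C(k.*2.+1, k.+1).
  rewrite -bin_sub; last by lia.
  by congr binomial; lia.
have := mul_bin_diag (k.*2.+1) k; rewrite /= => e2.
rewrite e1 mulnDl (mulnC _ k.+1) -e2 /=. lia.
Qed.

Lemma central_bound k : 'C(k.*2, k)^2 * k.*2.+1 <= 16^k.
Proof.
elim: k => [|k IH]; first by [].
have h := central_rec k.
have : ('C(k.+1.*2, k.+1) ^ 2 * k.+1.*2.+1) * (k.+1 ^ 2) <= 16 ^ k.+1 * k.+1^2.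
  have -> : ('C(k.+1.*2, k.+1) ^ 2 * k.+1.*2.+1) * (k.+1 ^ 2)
     = ('C(k.+1.*2, k.+1) * k.+1)^2 * k.+1.*2.+1 by ring.
  rewrite h.
  have -> : (2 * k.*2.+1 * 'C(k.*2, k)) ^ 2 * k.+1.*2.+1 =
     ('C(k.*2, k) ^ 2 * k.*2.+1) * (4 * k.*2.+1 * k.+1.*2.+1) by ring.
  have -> : 16 ^ k.+1 * k.+1 ^ 2 = 16 ^ k * (16 * k.+1 ^ 2) by rewrite expnS; ring.
  apply: leq_mul => //.
  rewrite -!addnn; nia.
rewrite leq_pmul2r ?expn_gt0 //.
Qed.

Lemma bin_sq_le k j : 'C(k,j)^2 <= 'C(k.*2, k).
Proof.
case: (leqP j k) => hj; last by rewrite bin_small.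
have := binomial.Vandermonde k k k; rewrite addnn => <-.
rewrite (bigD1 (Ordinal (n:=k.+1) (m:=j) hj)) //= bin_sub // -mulnn. apply: leq_addr.
Qed.

Lemma bin_4_bound k j : 'C(k,j)^4 * k.*2.+1 <= (2^k)^4.
Proof.
have -> : (2^k)^4 = 16^k by rewrite -expnM mulnC expnM.
apply: leq_trans (central_bound k).
have -> : 'C(k,j)^4 = ('C(k,j)^2)^2 by rewrite -expnM.
by rewrite leq_mul2r leq_exp2r ?bin_sq_le ?orbT.
Qed.
Local Open Scope ring_scope.

Definition Bf (R : numDomainType) (k : nat) (d : R) : R :=
  \sum_(j < k.+1) (if d == j.*2%:R - k%:R then 'C(k,j)%:R else 0).

Lemma eqcond (R : numDomainType) (x y x' y' : R) : x - y = x' - y' -> (x == y) = (x' == y').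
Proof. by move=> H; rewrite -subr_eq0 H subr_eq0. Qed.

Lemma if_add (R : numDomainType) (b : bool) (x y : R) :
  (if b then x + y else 0) = (if b then x else 0) + (if b then y else 0).
Proof. by case: b; rewrite ?addr0. Qed.

Lemma bump0' i : bump 0 i = i.+1.
Proof. by []. Qed.

Lemma Bf0 (R : numDomainType) (d : R) : Bf 0 d = (d == 0)%:R.
Proof. by rewrite /Bf big_ord1 /= subr0; case: (d == 0). Qed.

Lemma Bf_pascal (R : numDomainType) k (d : R) :
  Bf k.+1 d = Bf k (d - 1) + Bf k (d + 1).
Proof.
rewrite /Bf big_ord_recl /=.
under eq_bigr => j _ do rewrite bump0' binS natrD if_add.
rewrite big_split /= addrA addrC; congr (_ + _).
  apply: eq_bigr => j _; congr (if _ then _ else _); apply: eqcond.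
  rewrite !doubleS -!muln2 !natrM -!natr1; ring.
rewrite [RHS]big_ord_recl big_ord_recr /= !bin0 (bin_small (ltnSn k)) if_same addr0.
congr (_ + _).
  congr (if _ then _ else _); apply: eqcond; rewrite -!natr1; ring.
apply: eq_bigr => j _; rewrite ?bump0'; congr (if _ then _ else _); apply: eqcond.
rewrite -!muln2 !natrM -!natr1; ring.
Qed.

Lemma Bf_ge0 (R : numDomainType) k (d : R) : 0 <= Bf k d.
Proof. by apply: sumr_ge0 => j _; case: ifP. Qed.

Lemma Bf_bound (R : numDomainType) k (d : R) :
  Bf k d ^+ 4 * (k.*2.+1)%:R <= ((2^k)%:R)^+4.
Proof.
rewrite /Bf; case: (pickP (fun j : 'I_k.+1 => d == j.*2%:R - k%:R)) => [j0 hj0 | hnone].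
  rewrite (bigD1 j0) //= hj0 big1 ?addr0.
    by rewrite -!natrX -natrM ler_nat bin_4_bound.
  move=> j hj; case: ifP => // h; exfalso; move/negP: hj; apply.
  move/eqP: hj0 => hj0; move/eqP: h; rewrite hj0 => /addIr /eqP.
  rewrite eqr_nat => /eqP /double_inj hjj; apply/eqP/val_inj => //.
rewrite big1; last by move=> j _; rewrite hnone.
by rewrite expr0n mul0r exprn_ge0 // ler0n.
Qed.

Definition consf (T : finType) n (t : T) (Q : {ffun 'I_n -> T}) : {ffun 'I_n.+1 -> T} :=
  [ffun i => if unlift ord0 i is Some j then Q j else t].
Definition tailf (T : finType) n (Q : {ffun 'I_n.+1 -> T}) : {ffun 'I_n -> T} :=
  [ffun j => Q (lift ord0 j)].

Lemma sum_ffunS (R : nmodType) (T : finType) n (F : {ffun 'I_n.+1 -> T} -> R) :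
  \sum_(Q : {ffun 'I_n.+1 -> T}) F Q = \sum_(t : T) \sum_(Q : {ffun 'I_n -> T}) F (consf t Q).
Proof.
rewrite [RHS]pair_big /=.
rewrite (reindex (fun p : T * {ffun 'I_n -> T} => consf p.1 p.2)) //=.
exists (fun Q : {ffun 'I_n.+1 -> T} => (Q ord0, tailf Q)) => [[t Q] _ | Q _] /=.
  rewrite /consf /tailf ffunE unlift_none; congr (_, _).
  by apply/ffunP => j; rewrite !ffunE liftK.
apply/ffunP => i; rewrite /consf /tailf ffunE.
by case: (unliftP ord0 i) => [j ->|->]; rewrite ?ffunE.
Qed.

Definition Dw (R : numDomainType) (T : finType) (X : T -> R) n (c : R) : R :=
  \sum_(Q : {ffun 'I_n -> T}) ((\sum_(v < n) X (Q v)) == c)%:R.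

Lemma D_rec (R : numDomainType) (T : finType) (X : T -> R) n c :
  Dw X n.+1 c = \sum_(t : T) Dw X n (c - X t).
Proof.
rewrite /Dw sum_ffunS; apply: eq_bigr => t _; apply: eq_bigr => Q _.
rewrite big_ord_recl /consf ffunE unlift_none.
under eq_bigr => i _ do rewrite ffunE liftK.
by rewrite [in RHS]eq_sym subr_eq eq_sym addrC.
Qed.

Definition Fs (R : numDomainType) (T : finType) (X : T -> R) :=
  [set t | (X t != 1) && (X t != -1)].

Lemma D_rec3 (R : numDomainType) (T : finType) (X : T -> R) (e : nat)
  (hp : #|[set t | X t == 1]| = e) (hn : #|[set t | X t == -1]| = e) n c :
  Dw X n.+1 c = e%:R * (Dw X n (c - 1) + Dw X n (c + 1)) + \sum_(t in Fs X) Dw X n (c - X t).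
Proof.
rewrite D_rec (bigID (fun t => X t == 1)) /= [X in _ + X](bigID (fun t => X t == -1)) /=.
rewrite mulrDr addrA; congr (_ + _ + _).
- rewrite (eq_bigr (fun _ => Dw X n (c - 1))); last by move=> t /eqP ->.
  rewrite (eq_bigl (fun t => t \in [set t | X t == 1])); last by move=> t; rewrite inE.
  by rewrite sumr_const hp mulr_natl.
- rewrite (eq_bigr (fun _ => Dw X n (c + 1))); last by move=> t /andP [_ /eqP ->]; rewrite opprK.
  rewrite (eq_bigl (fun t => t \in [set t | X t == -1])).
    by rewrite sumr_const hn mulr_natl.
  move=> t; rewrite inE; case: (X t =P -1) => [->|_]; rewrite ?andbT ?andbF //.
  by rewrite eq_sym -subr_eq0 opprK -mulr2n mulrn_eq0 oner_eq0.
- by apply: eq_bigl => t; rewrite inE.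
Qed.

Lemma D_atoms (R : numDomainType) (T : finType) (X : T -> R) (e : nat)
  (hp : #|[set t | X t == 1]| = e) (hn : #|[set t | X t == -1]| = e) n :
  exists L : seq ((nat * R) * R),
   [/\ forall c, Dw X n c = \sum_(a <- L) a.2 * Bf a.1.1 (c - a.1.2),
       forall a, a \in L -> 0 <= a.2 &
       forall z : R, \sum_(a <- L) a.2 * (2^a.1.1)%:R * z ^+ a.1.1
                     = ((e.*2)%:R * z + #|Fs X|%:R) ^+ n].
Proof.
elim: n => [|n [L [hD hW hG]]].
  exists [:: ((0%N, 0), 1)]; split.
  - move=> c; rewrite big_seq1 /= mul1r Bf0 subr0 /Dw.
    rewrite (eq_bigr (fun _ => (0 == c)%:R)); last by move=> Q _; rewrite big_ord0.
    by rewrite sumr_const card_ffun card_ord expn0 eq_sym.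
  - by move=> a; rewrite inE => /eqP -> /=.
  - by move=> z; rewrite big_seq1 /= !mul1r expr0.
exists ([seq ((a.1.1.+1, a.1.2), a.2 * e%:R) | a <- L] ++
        [seq ((a.1.1, a.1.2 + X t), a.2) | a <- L, t <- enum (Fs X)]); split.
- move=> c; rewrite (D_rec3 hp hn) big_cat big_map big_allpairs_dep /=.
  rewrite hD hD.
  under eq_bigr => t _ do rewrite hD.
  rewrite exchange_big /=.
  under [X in _ = _ + X]eq_bigr => a _ do rewrite big_enum.
  congr (_ + _).
    rewrite -big_split /= mulr_sumr; apply: eq_bigr => a _; rewrite Bf_pascal.
    have -> : c - a.1.2 - 1 = c - 1 - a.1.2 by ring.
    have -> : c - a.1.2 + 1 = c + 1 - a.1.2 by ring.
    ring.
  apply: eq_bigr => a _; apply: eq_bigr => t _.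
  by have -> : c - X t - a.1.2 = c - (a.1.2 + X t) by ring.
- move=> a; rewrite mem_cat => /orP [/mapP [b hb ->] | /allpairsP [[b t] [hb _ ->]]] /=.
    by rewrite mulr_ge0 ?hW ?ler0n.
  exact: hW.
- move=> z; rewrite big_cat big_map big_allpairs_dep /= exprS -hG.
  rewrite mulrDl !mulr_sumr; congr (_ + _); apply: eq_bigr => a _.
    rewrite expnS natrM -mul2n natrM exprS; ring.
  by rewrite big_enum sumr_const mulr_natl.
Qed.

Lemma Bf_le_pow (R : realFieldType) k (d : R) : Bf k d <= (2^k)%:R.
Proof.
have h := Bf_bound k d; have h0 := Bf_ge0 k d.
have h4 : Bf k d ^+ 4 <= ((2^k)%:R)^+4.
  apply: le_trans h; rewrite ler_peMr ?exprn_ge0 // ler1n //.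
by rewrite -(@ler_pXn2r _ 4) // ?nnegrE ?ler0n.
Qed.

Lemma Bf_small (R : realFieldType) k (d : R) eps : 0 < eps ->
  1 <= eps^+4 * (k.*2.+1)%:R -> Bf k d <= eps * (2^k)%:R.
Proof.
move=> he hk; have h := Bf_bound k d; have h0 := Bf_ge0 k d.
rewrite leNgt; apply/negP => hlt.
have hP : 0 < ((2^k)%:R : R) by rewrite ltr0n expn_gt0.
have h1 : (eps * (2^k)%:R) ^+ 4 < Bf k d ^+ 4.
  by rewrite ltr_pXn2r // ?nnegrE ?mulr_ge0 ?ltW.
have h2 : (eps * (2^k)%:R) ^+ 4 * (k.*2.+1)%:R < ((2^k)%:R)^+4.
  apply: lt_le_trans h; rewrite ltr_pM2r ?ltr0n //.
move: h2; rewrite exprMn -mulrA [_ * (_%:R)]mulrC mulrA. rewrite -[X in _ < X]mul1r ltr_pM2r ?exprn_gt0 //.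
by rewrite ltNge hk.
Qed.

Lemma D_bound (R : realFieldType) (T : finType) (X : T -> R) (e : nat)
  (hp : #|[set t | X t == 1]| = e) (hn : #|[set t | X t == -1]| = e) n c K0 eps :
  0 <= eps -> (forall k (d : R), (K0 <= k)%N -> Bf k d <= eps * (2^k)%:R) ->
  Dw X n c <= eps * ((e.*2 + #|Fs X|)%:R)^+n + (2^K0)%:R * ((e + #|Fs X|)%:R)^+n.
Proof.
move=> he hB.
have [L [hD hW hG]] := D_atoms hp hn n.
have G1 := hG 1; have G2 := hG 2^-1.
have -> : ((e.*2 + #|Fs X|)%:R : R) = e.*2%:R * 1 + #|Fs X|%:R by rewrite mulr1 natrD.
have -> : ((e + #|Fs X|)%:R : R) = e.*2%:R * 2^-1 + #|Fs X|%:R.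
  by rewrite -muln2 natrM mulfK ?natrD // pnatr_eq0.
rewrite -G1 -G2 hD !mulr_sumr -big_split /= big_seq [X in _ <= X]big_seq; apply: ler_sum => a ha.
have w0 := hW a ha.
have hq : ((2 ^ a.1.1)%:R : R) * 2^-1 ^+ a.1.1 = 1.
  by rewrite natrX -exprMn mulfV ?expr1n // pnatr_eq0.
rewrite expr1n mulr1 -mulrA hq mulr1.
have hK : (0 : R) <= (2^K0)%:R by rewrite ler0n.
have hP : (0 : R) <= (2^a.1.1)%:R by rewrite ler0n.
case: (leqP K0 a.1.1) => hk.
  have := hB a.1.1 (c - a.1.2) hk; nra.
have h1 := Bf_le_pow a.1.1 (c - a.1.2).
have h2 : ((2^a.1.1)%:R : R) <= (2^K0)%:R by rewrite ler_nat leq_exp2l // ltnW.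
have h3 := mulr_ge0 he (mulr_ge0 w0 hP).
have h4 : a.2 * Bf a.1.1 (c - a.1.2) <= a.2 * (2^K0)%:R by rewrite ler_wpM2l // (le_trans h1 h2).
lra.
Qed.

Definition Xab (R : realType) m (w : 'I_m -> R) (a b : 'I_m) (t : {perm 'I_m}) : R :=
  w (t a) - w (t b).

Lemma score_sum (R : realType) m n (w : 'I_m -> R) (P : {ffun 'I_n -> {perm 'I_m}}) a :
  score w P a = \sum_(v < n) w (P v a).
Proof.
rewrite /score (partition_big (fun v => P v) predT) //=; apply: eq_bigr => t _.
rewrite (eq_bigr (fun _ => w (t a))); last by move=> v /eqP ->.
rewrite (eq_bigl (fun v => v \in [set v | P v == t])); last by move=> v; rewrite inE.
by rewrite sumr_const mulr_natl /Ncount /sigma.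
Qed.

Lemma score_diff (R : realType) m n (w : 'I_m -> R) (P : {ffun 'I_n -> {perm 'I_m}}) a b :
  score w P a - score w P b = \sum_(v < n) Xab w a b (P v).
Proof. by rewrite !score_sum -sumrB. Qed.

Lemma Xab_swap (R : realType) m (w : 'I_m -> R) a b t :
  Xab w a b (tperm a b * t)%g = - Xab w a b t.
Proof. by rewrite /Xab !permM tpermL tpermR opprB. Qed.

Lemma card_neg (R : realType) m (w : 'I_m -> R) a b :
  #|[set t | Xab w a b t == -1]| = #|[set t | Xab w a b t == 1]|.
Proof.
rewrite -(card_preimset _ (@mulgI _ (tperm a b))); apply: eq_card => t.
by rewrite !inE Xab_swap eqr_opp.
Qed.

Lemma card_split (R : numDomainType) (T : finType) (X : T -> R) :
  #|T| = (#|[set t | X t == 1%R]| + #|[set t | X t == (-1)%R]| + #|Fs X|)%N.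
Proof.
have n1 : (1 : R) != -1 by rewrite -subr_eq0 opprK -mulr2n mulrn_eq0 oner_eq0.
rewrite -(cardsC [set t | X t == 1]) -addnA; congr (_ + _)%N.
rewrite -(cardsID [set t | X t == -1]); congr (_ + _)%N; apply: eq_card => t.
  rewrite !inE; case: (X t =P -1) => [->|]; rewrite ?andbT ?andbF //.
  by rewrite eq_sym.
by rewrite !inE andbC.
Qed.

Lemma e_pos (R : realType) m (hm : (3 <= m)%N) (w : 'I_m -> R)
  (hw1 : forall i : 'I_m, nat_of_ord i = 0%N -> w i = 1)
  (hwm : forall i : 'I_m, nat_of_ord i = m.-1 -> w i = 0) a b (hab : a != b) :
  (0 < #|[set t | Xab w a b t == 1%R]|)%N.
Proof.
have h0 : (0 < m)%N by lia.
have h1 : (m.-1 < m)%N by lia.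
pose i0 := Ordinal h0; pose i1 := Ordinal h1.
pose s := tperm a i0 b.
have hs : s != i0.
  apply/eqP => hs; move: hab; rewrite -(inj_eq (@perm_inj _ (tperm a i0))).
  by rewrite -/s hs tpermL eqxx.
have h01 : i0 != i1 by apply/eqP => /(congr1 val) /=; lia.
apply/card_gt0P; exists (tperm a i0 * tperm s i1)%g; rewrite inE /Xab !permM.
rewrite tpermL -/s tpermL tpermD 1?eq_sym //.
rewrite hw1 // hwm // subr0 ?eqxx //. all: try by move: hs; rewrite eq_sym.
Qed.

Lemma pair_bound (R : realType) m (hm : (3 <= m)%N) (w : 'I_m -> R)
  (hw1 : forall i : 'I_m, nat_of_ord i = 0%N -> w i = 1)
  (hwm : forall i : 'I_m, nat_of_ord i = m.-1 -> w i = 0) a b (hab : a != b)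
  n K0 (d : R) : 0 < d -> 1 <= d ^+ 4 * (K0.*2.+1)%:R ->
  Dw (Xab w a b) n 0 <= d * (#|{perm 'I_m}|%:R) ^+ n
                        + (2^K0)%:R * ((#|{perm 'I_m}|.-1)%:R) ^+ n.
Proof.
move=> hd hK.
set X := Xab w a b.
have hp : #|[set t | X t == 1]| = #|[set t | X t == 1]| by [].
have hn := card_neg w a b.
have he := e_pos hm hw1 hwm hab.
have hB : forall k (x : R), (K0 <= k)%N -> Bf k x <= d * (2^k)%:R.
  move=> k x hk; apply: Bf_small => //; apply: le_trans hK _.
  apply: ler_wpM2l; first by rewrite exprn_ge0 // ltW.
  by rewrite ler_nat; lia.
have := D_bound hp hn n 0 (ltW hd) hB.
rewrite (card_split X) hn -/X.
set e := #|[set t | X t == 1]|; set f := #|Fs X|.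
move=> h; apply: le_trans h _; rewrite -addnn lerD2l; apply: ler_wpM2l; first exact: ler0n.
have he2 : (0 < e)%N := he.
apply: lerXn2r; rewrite ?nnegrE ?ler0n // ler_nat; lia.
Qed.

Unset Implicit Arguments.
Local Open Scope classical_set_scope.

Theorem proposition3 (R : realType) (m : nat) (hm : (3 <= m)%N) (w : 'I_m -> R)
  (hw1 : forall i : 'I_m, nat_of_ord i = 0%N -> w i = 1)
  (hwm : forall i : 'I_m, nat_of_ord i = m.-1 -> w i = 0)
  (hwmono : forall i j : 'I_m, (i <= j)%N -> w j <= w i) :
  (fun n : nat => prob_distinct w n) @ \oo --> (1 : R^o).
Proof.
set N := #|{perm 'I_m}|.
have hN : (0 < N)%N by apply/card_gt0P; exists 1%g.
have hNR : (0 : R) < N%:R by rewrite ltr0n.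
have key : forall n K0 (d : R), 0 < d -> 1 <= d ^+ 4 * (K0.*2.+1)%:R ->
   `|1 - prob_distinct w n| <= (m * m)%N%:R * (d + (2^K0)%:R * (1 - N%:R^-1) ^+ n).
  move=> n K0 d hd hK.
  pose D := [set P : {ffun 'I_n -> {perm 'I_m}} | distinct_scores w P]%SET.
  have hc : #|{ffun 'I_n -> {perm 'I_m}}| = (N ^ n)%N by rewrite card_ffun card_ord.
  have hsplit : (#|D| + #|~: D|)%N = (N ^ n)%N by rewrite cardsC hc.
  have hNn : (0 : R) < (N ^ n)%:R by rewrite ltr0n expn_gt0 hN.
  have hC : 0 <= d * N%:R ^+ n + (2^K0)%:R * (N.-1)%:R ^+ n.
    by rewrite addr_ge0 // mulr_ge0 ?exprn_ge0 ?ler0n ?ltW.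
  have hND : (#|~: D|%:R : R) <= (m * m)%N%:R * (d * N%:R ^+ n + (2^K0)%:R * (N.-1)%:R ^+ n).
    have -> : (#|~: D|%:R : R) = \sum_(P : {ffun 'I_n -> {perm 'I_m}}) (~~ distinct_scores w P)%:R.
      rewrite -sumr_const big_mkcond /=; apply: eq_bigr => P _.
      by rewrite !inE; case: distinct_scores.
    have pw : forall P : {ffun 'I_n -> {perm 'I_m}},
      (~~ distinct_scores w P)%:R <= \sum_(a < m) \sum_(b < m)
        ((a != b) && (\sum_(v < n) Xab w a b (P v) == 0))%:R :> R.
      move=> P; case hdP: (distinct_scores w P) => /=.
        by apply: sumr_ge0 => a _; apply: sumr_ge0 => b _; exact: ler0n.
      move/negbT: hdP => /forallPn [a /forallPn [b]].
      rewrite negb_imply negbK => /andP [hab /eqP heq].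
      rewrite (bigD1 a) //= (bigD1 b) //= hab -score_diff heq subrr eqxx /=.
      rewrite -addrA lerDl addr_ge0 //.
        by apply: sumr_ge0 => c _; exact: ler0n.
      by apply: sumr_ge0 => c _; apply: sumr_ge0 => c' _; exact: ler0n.
    apply: le_trans (ler_sum _ (fun P _ => pw P)) _.
    rewrite exchange_big /=.
    under eq_bigr => a _ do rewrite exchange_big /=.
    have pb : forall a b : 'I_m,
      \sum_(P : {ffun 'I_n -> {perm 'I_m}}) ((a != b) && (\sum_(v < n) Xab w a b (P v) == 0))%:R
        <= d * N%:R ^+ n + (2^K0)%:R * (N.-1)%:R ^+ n.
      move=> a b; case: (eqVneq a b) => [->|hab] /=.
        by rewrite big1 // => P _; rewrite eqxx.
      exact: (pair_bound hm hw1 hwm hab).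
    apply: le_trans (ler_sum _ (fun a _ => ler_sum _ (fun b _ => pb a b))) _.
    rewrite [X in X <= _](eq_bigr (fun _ => (d * N%:R ^+ n + (2 ^ K0)%:R * N.-1%:R ^+ n) *+ m)); last by move=> i _; rewrite sumr_const card_ord.
    by rewrite sumr_const card_ord -mulrnA [X in _ <= X]mulr_natl lexx.
  have -> : 1 - prob_distinct w n = #|~: D|%:R / (N ^ n)%:R.
    rewrite /prob_distinct -/D hc -hsplit natrD; field.
    by rewrite -natrD hsplit gt_eqF.
  rewrite ger0_norm ?divr_ge0 ?ler0n // ler_pdivrMr //.
  apply: le_trans hND _.
  have hq : (N.-1)%:R = (1 - N%:R^-1) * N%:R :> R.
    by rewrite -subn1 natrB // mulrBl mul1r mulVf ?gt_eqF.
  rewrite hq exprMn !natrX le_eqVlt; apply/orP; left; apply/eqP; ring.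
apply/cvgrPdist_le => eps heps.
pose M : R := (m * m)%N%:R.
have hM : 0 < M by rewrite ltr0n muln_gt0; apply/andP; split; lia.
pose d := eps / (2 * M).
have hd : 0 < d by rewrite divr_gt0 // mulr_gt0.
pose K0 := Num.truncn ((d ^+ 4)^-1).
have h4 : 0 < d ^+ 4 by rewrite exprn_gt0.
have hK : 1 <= d ^+ 4 * (K0.*2.+1)%:R.
  have h1 := Num.Theory.truncnS_gt ((d ^+ 4)^-1).
  have h2 : (K0.+1%:R : R) <= (K0.*2.+1)%:R by rewrite ler_nat; lia.
  have h3 : (d ^+ 4)^-1 <= (K0.*2.+1)%:R := ltW (lt_le_trans h1 h2).
  by have := ler_wpM2l (ltW h4) h3; rewrite mulfV ?gt_eqF.
pose q : R := 1 - N%:R^-1.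
have hq : `|q| < 1.
  have hi0 : 0 < N%:R^-1 :> R by rewrite invr_gt0.
  have hi1 : N%:R^-1 <= 1 :> R by rewrite invf_le1 // ler1n.
  rewrite ger0_norm /q; lra.
have hdK : 0 < d / (2^K0)%:R by rewrite divr_gt0 // ltr0n expn_gt0.
have := cvg_expr hq; move/cvgrPdist_le => /(_ _ hdK) hc.
apply: filterS hc => n hn.
apply: le_trans (key n K0 d hd hK) _.
move: hn; rewrite sub0r normrN ger0_norm ?exprn_ge0 //; last first.
  by rewrite /q subr_ge0 invf_le1 // ler1n.
rewrite ler_pdivlMr ?ltr0n ?expn_gt0 // => ht.
have hMd : M * d * 2 = eps by rewrite /d; field; rewrite pnatr_eq0 -lt0n; lia.
rewrite -/M -/q; nra.
Qed.
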